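(* Consider the cone percolation process on $\mathbb{T}_d^+$ ($d\ge2$) with radius of influence distributed as $R$. Let $\rho$ be the smallest non-negative root of $\mathbb{E}(\rho^{d^R}) + (1-\rho)p_0 = \rho$, and let $\psi$ be the smallest non-negative root of $\mathbb{E}\big(\psi^{\frac{d}{d-1}(d^R-1)}\big) = \psi$. Then $$1-\rho \le \mathbb{P}_+[V] \le 1-\psi.$$
   Context: Let $d\ge 2$ and let $\mathbb{T}_d$ be the infinite tree in which every vertex has exactly $d+1$ neighbours. Fix a vertex $\mathcal{O}$ (the origin); $d(u,v)$ denotes graph distance. Write $u\le v$ if $u$ lies on the path from $\mathcal{O}$ to $v$ (so $\mathcal{O}\le v$ for all $v$). Fix a neighbour $w$ of $\mathcal{O}$ and let $\mathbb{T}_d^+$ be the subtree obtained by deleting all vertices $x$ with $w\le x$; in $\mathbb{T}_d^+$ every vertex $u$ has exactly $d$ neighbours $x$ with $u\le x$ (its children). Let $R$ be a random variable with values in $\{0,1,2,\dots\}$, $p_k=\mathbb{P}(R=k)$, and assume $p_0\in(0,1)$. Cone percolation on $G\in\{\mathbb{T}_d,\mathbb{T}_d^+\}$: to each vertex $u$ of $G$ attach an independent copy $R_u$ of $R$; let $B_u=\{v\in G: u\le v,\ d(u,v)\le R_u\}$; set $I_0=\{\mathcal{O}\}$, $I_{n+1}=\bigcup_{u\in I_n}B_u$ for $n\ge0$, $I=\bigcup_{n\ge0}I_n$, and let $V$ be the event $\{|I|=\infty\}$ (survival). $\mathbb{P}_+$ and $\mathbb{P}$ denote the probability measures of the process on $\mathbb{T}_d^+$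 and on $\mathbb{T}_d$ respectively. Convention: $x^0=1$ for all $x\ge0$. *)

(* Defs.v *)
From HB Require Import structures.
From mathcomp Require Import all_boot all_order all_algebra.
From mathcomp Require Import all_classical all_reals all_analysis.
Set Implicit Arguments. Unset Strict Implicit. Unset Printing Implicit Defensive.
Import Order.TTheory GRing.Theory Num.Theory.
Local Open Scope classical_set_scope.
Local Open Scope ring_scope.

(* Vertices of T_d^+ (the rooted tree where every vertex has d children):
   finite words over 'I_d; the origin O is the empty word [::]. *)
Definition vertex (d : nat) := seq 'I_d.

(* u <= v : u lies on the path from O to v, i.e. u is a prefix of v. *)
Definition vle {d} (u v : vertex d) : bool := prefix u v.

(* graph distance d(u,v) when u <= v *)
Definition vdist {d} (u v : vertex d) : nat := (size v - size u)%N.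

Definition cone {d} (Rad : vertex d -> nat) (u : vertex d) : set (vertex d) :=
  [set v | vle u v /\ (vdist u v <= Rad u)%N].

Fixpoint infected {d} (Rad : vertex d -> nat) (n : nat) : set (vertex d) :=
  match n with
  | O => [set [::]]
  | n'.+1 => \bigcup_(u in infected Rad n') cone Rad u
  end.

Definition infected_all {d} (Rad : vertex d -> nat) : set (vertex d) :=
  \bigcup_(n in [set: nat]) infected Rad n.

Definition survival {d} {T : Type} (Rad : vertex d -> T -> nat) : set T :=
  [set w | ~ finite_set (infected_all (fun u => Rad u w))].

(* The family (X_i)_{i in I} of nat-valued random variables is i.i.d. with
   law p (p k = P(X_i = k)): all events {X_i = k} are measurable, and for every
   finite family of distinct indices the joint law is the product law. *)
Definition iid_law {dm : measure_display} {T : measurableType dm} {R : realType}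
  (P : probability T R) (I : eqType) (X : I -> T -> nat) (p : nat -> R) : Prop :=
  (forall i k, measurable [set w | X i w = k]) /\
  (forall (s : seq I) (k : I -> nat), uniq s ->
     P (\bigcap_(i in [set` s]) [set w | X i w = k i]) =
     (\prod_(i <- s) p (k i))%:E).

Definition smallest_nonneg_root {R : realType} (f : R -> \bar R) (x : R) : Prop :=
  0 <= x /\ f x = x%:E /\ (forall y, 0 <= y -> f y = y%:E -> x <= y).

Definition rho_map {R : realType} (d : nat) (p : nat -> R) (x : R) : \bar R :=
  ((\sum_(0 <= k <oo) (p k * x ^+ (d ^ k)%N)%:E) + ((1 - x) * p 0%N)%:E)%E.

Definition psi_map {R : realType} (d : nat) (p : nat -> R) (x : R) : \bar R :=
  (\sum_(0 <= k <oo) (p k * x `^ ((d%:R / (d%:R - 1)) * (d%:R ^+ k - 1)))%:E)%E.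

(* Main.v *)
Require Import Defs.
From HB Require Import structures.
From mathcomp Require Import all_boot all_order all_algebra.
From mathcomp Require Import all_classical all_reals all_analysis.
From mathcomp Require Import zify ring lra.
Import Order.TTheory GRing.Theory Num.Theory.
Import numFieldNormedType.Exports.

Set Implicit Arguments. Unset Strict Implicit. Unset Printing Implicit Defensive.

Notation config d := (seq (vertex d * nat)).

Section PartComb.
Local Open Scope classical_set_scope.
Local Open Scope ring_scope.
Definition agree {d} (f : vertex d -> nat) (c : config d) : bool :=
  all (fun x => f x.1 == x.2) c.

Fixpoint ext {d} (f : vertex d -> nat) (n : nat) (u : vertex d) (b : nat) : bool :=
  match n with
  | 0 => false
  | n'.+1 => let s := maxn (f u) b in
      (s == 0)%N || ((s <= n')%N && all (fun i => ext f n' (rcons u i) s.-1) (enum 'I_d))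
  end.

Fixpoint catpairs {T : Type} (s t : seq (seq T)) : seq (seq T) :=
  match s with [::] => [::] | x :: s' => map (cat x) t ++ catpairs s' t end.

Definition combos {d} (Ls : 'I_d -> seq (config d)) (ids : seq 'I_d) : seq (config d) :=
  foldr (fun i acc => catpairs (Ls i) acc) [:: [::]] ids.

Fixpoint LL {d} (n : nat) (u : vertex d) (b : nat) : seq (config d) :=
  match n with
  | 0 => [::]
  | n'.+1 => flatten [seq (let s := maxn r b in
       if (s == 0)%N then [:: [:: (u, r)]]
       else if (s <= n')%N then [seq (u, r) :: c | c <- combos (fun i => LL n' (rcons u i) s.-1) (enum 'I_d)]
       else [::]) | r <- iota 0 n'.+1]
  end.

Lemma maxn_eq0 (a b : nat) : (maxn a b == 0)%N = (a == 0)%N && (b == 0)%N.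
Proof. by case: a => [|a]; case: b => [|b] //; rewrite /maxn; case: ifP. Qed.

Lemma agree_cat {d} (f : vertex d -> nat) c c' : agree f (c ++ c') = agree f c && agree f c'.
Proof. exact: all_cat. Qed.

Lemma has_flatten {T : eqType} (a : pred T) ss : has a (flatten ss) = has (has a) ss.
Proof. by elim: ss => //= s ss IH; rewrite has_cat IH. Qed.

Lemma has_catpairs {d} (f : vertex d -> nat) s t :
  has (agree f) (catpairs s t) = has (agree f) s && has (agree f) t.
Proof.
elim: s => //= x s IH; rewrite has_cat IH has_map.
case Ax: (agree f x).
  rewrite (eq_has (a2 := agree f)); last by move=> c; rewrite /preim /= /agree all_cat -/(agree f x) Ax.
  by case: (has (agree f) t); case: (has (agree f) s).
rewrite (eq_has (a2 := pred0)); last by move=> c; rewrite /preim /= /agree all_cat -/(agree f x) Ax.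
by rewrite has_pred0.
Qed.

Lemma count_catpairs {d} (f : vertex d -> nat) s t :
  count (agree f) (catpairs s t) = (count (agree f) s * count (agree f) t)%N.
Proof.
elim: s => //= x s IH; rewrite count_cat IH count_map mulnDl.
case Ax: (agree f x).
  rewrite (eq_count (a2 := agree f)); last by move=> c; rewrite /preim /= /agree all_cat -/(agree f x) Ax.
  by rewrite mul1n.
rewrite (eq_count (a2 := pred0)); last by move=> c; rewrite /preim /= /agree all_cat -/(agree f x) Ax.
by rewrite count_pred0.
Qed.

Lemma has_combos {d} (f : vertex d -> nat) Ls ids :
  has (agree f) (combos Ls ids) = all (fun i => has (agree f) (Ls i)) ids.
Proof. by elim: ids => //= i ids IH; rewrite has_catpairs IH. Qed.

Lemma count_combos {d} (f : vertex d -> nat) Ls ids :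
  count (agree f) (combos Ls ids) = (\prod_(i <- ids) count (agree f) (Ls i))%N.
Proof. by elim: ids => /= [|i ids IH]; rewrite ?big_nil ?big_cons ?count_catpairs ?IH. Qed.

Lemma has_LL {d} (f : vertex d -> nat) n u b : has (agree f) (LL n u b) = ext f n u b.
Proof.
elim: n u b => // n IH u b. rewrite /LL -/LL has_flatten has_map.
have -> : ext f n.+1 u b = (f u <= n)%N && ((maxn (f u) b == 0)%N || ((maxn (f u) b <= n)%N &&
   all (fun i => ext f n (rcons u i) (maxn (f u) b).-1) (enum 'I_d))).
  rewrite /=; case: eqP => [/eqP|_]; first by rewrite maxn_eq0 => /andP[/eqP -> _].
  case: leqP => h /=; last by rewrite andbF.
  by rewrite (leq_trans (leq_maxl _ _) h).
have -> : (f u <= n)%N = (f u \in iota 0 n.+1) by rewrite mem_iota.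
apply/hasP/idP.
  case=> r rin; rewrite [X in X -> _]/=; case: ifP => [/eqP E|_].
    by rewrite /= orbF andbT => /eqP ru; rewrite ru rin E.
  case: ifP => h; last by [].
  rewrite has_map => /hasP [c cin]; rewrite /preim /= => /andP [/eqP ru ac].
  rewrite ru rin h /=; apply/orP; right; apply/allP => i iin.
  rewrite -IH; have := (has_combos f (fun i => LL n (rcons u i) (maxn r b).-1) (enum 'I_d)).
  rewrite (_ : has _ _ = true); last by apply/hasP; exists c.
  by move/esym/allP/(_ i iin).
move=> /andP [fin H]; exists (f u) => //=.
case: eqP => [_|ne]; first by rewrite /= eqxx.
move: H; rewrite (negbTE (introN eqP ne)) /= => /andP [-> H].
rewrite has_map /=; rewrite (eq_has (a2 := agree f)); last by move=> c; rewrite /= eqxx.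
rewrite has_combos; apply/allP => i iin; rewrite IH; exact: (allP H).
Qed.

Lemma sumn_map_le {T : Type} (F G : T -> nat) s :
  (forall x, F x <= G x)%N -> (sumn (map F s) <= sumn (map G s))%N.
Proof. by move=> H; elim: s => //= x s IH; apply: leq_add. Qed.

Lemma prod_le1 {T : Type} (F : T -> nat) s :
  (forall x, F x <= 1)%N -> (\prod_(x <- s) F x <= 1)%N.
Proof.
move=> H; elim: s => [|x s IH]; rewrite ?big_nil ?big_cons //.
by rewrite -[1%N]/(1 * 1)%N; apply: leq_mul.
Qed.

Lemma count_LL {d} (f : vertex d -> nat) n u b : (count (agree f) (LL n u b) <= 1)%N.
Proof.
elim: n u b => // n IH u b; rewrite /LL -/LL count_flatten -map_comp.
apply: (leq_trans (sumn_map_le (G := fun r => nat_of_bool (f u == r)) _ _)).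
  move=> r /=; case: ifP => _ /=; first by rewrite andbT addn0.
  case: ifP => _ //; rewrite count_map.
  rewrite (eq_count (a2 := fun c => (f u == r) && agree f c)) //.
  case: eqP => _ /=; last by rewrite count_pred0.
  rewrite count_combos; apply: prod_le1 => i; exact: IH.
rewrite sumn_count (eq_count (a2 := pred1 (f u))); last by move=> x; rewrite /= eq_sym.
rewrite count_uniq_mem ?iota_uniq //; by case: (_ \in _).
Qed.

Lemma mem_catpairs {T : eqType} (s t : seq (seq T)) c :
  c \in catpairs s t -> exists2 x, x \in s & exists2 y, y \in t & c = x ++ y.
Proof.
elim: s => //= x s IH; rewrite mem_cat => /orP [/mapP [y yt ->]|/IH [x' x's [y yt ->]]].
  by exists x; rewrite ?mem_head //; exists y.
by exists x'; rewrite ?in_cons ?x's ?orbT //; exists y.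
Qed.

Lemma prefix_rcons_eq {d} (u v : vertex d) i j :
  prefix (rcons u i) v -> prefix (rcons u j) v -> i = j.
Proof.
rewrite !prefixE !size_rcons => /eqP -> /eqP.
by move/rcons_inj => [].
Qed.

Definition wf {d} (u : vertex d) (c : config d) : bool :=
  uniq (map fst c) && all (fun x => prefix u x.1) c.

Lemma wf_combos {d} (u : vertex d) (Ls : 'I_d -> seq (config d)) ids c :
  uniq ids -> (forall i c, c \in Ls i -> wf (rcons u i) c) ->
  c \in combos Ls ids ->
  uniq (map fst c) && all (fun x => has (fun i => prefix (rcons u i) x.1) ids) c.
Proof.
move=> + H; elim: ids c => [|i ids IH] c /=; first by rewrite inE => _ /eqP ->.
move=> /andP [iids uids] /mem_catpairs [x xin [y yin ->]].
have /andP [ux px] := H _ _ xin.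
have /andP [uy py] := IH _ uids yin.
rewrite map_cat cat_uniq ux uy all_cat /=; apply/and3P; split.
- rewrite andbT; apply/hasPn => v /mapP [z zy ->]; apply/negP => /mapP [z' zx' E].
  have /hasP [j jids pj] := allP py _ zy.
  have pi := allP px _ zx'; rewrite -E in pi.
  by move: iids; rewrite (prefix_rcons_eq pi pj) jids.
- by apply/allP => z zx; rewrite (allP px _ zx).
- by apply/allP => z zy; have /hasP [j jids pj] := allP py _ zy; apply/orP; right; apply/hasP; exists j.
Qed.

Lemma wf_LL {d} n (u : vertex d) b c : c \in LL n u b -> wf u c.
Proof.
elim: n u b c => // n IH u b c; rewrite /LL -/LL => /flatten_mapP [r rin].
case: ifP => _; first by rewrite inE => /eqP -> /=; rewrite /wf /= prefix_refl.
case: ifP => _ //; move=> /mapP [c' c'in ->].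
have /andP [u' a'] := wf_combos (enum_uniq _) (fun i c => @IH (rcons u i) _ c) c'in.
rewrite /wf /= u' prefix_refl /= andbT; apply/andP; split.
  apply/negP => /mapP [z zc E].
  have /hasP [j _ pj] := allP a' _ zc.
  by move: (size_prefix pj); rewrite size_rcons -E ltnn.
apply/allP => z zc; have /hasP [j _ pj] := allP a' _ zc.
exact: prefix_trans (prefix_rcons u j) pj.
Qed.

Section Weights.
Variable R : comPzRingType.
Definition wt (p : nat -> R) {d} (c : config d) : R := \prod_(x <- c) p x.2.

Fixpoint ee (d : nat) (p : nat -> R) (n b : nat) : R :=
  match n with
  | 0 => 0
  | n'.+1 => \sum_(r <- iota 0 n'.+1) p r *
     (if (maxn r b == 0)%N then 1 else if (maxn r b <= n')%N then ee d p n' (maxn r b).-1 ^+ d else 0)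
  end.

Lemma sum_catpairs p {d} (s t : seq (config d)) :
  \sum_(c <- catpairs s t) wt p c = (\sum_(c <- s) wt p c) * (\sum_(c <- t) wt p c).
Proof.
elim: s => [|x s IH]; first by rewrite !big_nil mul0r.
rewrite /= big_cat IH big_map big_cons mulrDl mulr_sumr /=.
congr (_ + _); rewrite mulr_sumr; apply: eq_bigr => c _; by rewrite /wt big_cat.
Qed.

Lemma sum_combos p {d} (Ls : 'I_d -> seq (config d)) ids :
  \sum_(c <- combos Ls ids) wt p c = \prod_(i <- ids) \sum_(c <- Ls i) wt p c.
Proof.
elim: ids => [|i ids IH]; first by rewrite big_nil /= big_cons big_nil addr0 /wt big_nil.
by rewrite big_cons /= sum_catpairs IH.
Qed.

Lemma sum_LL p {d} n (u : vertex d) b : \sum_(c <- LL n u b) wt p c = ee d p n b.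
Proof.
elim: n u b => [|n IH] u b; first by rewrite big_nil.
rewrite /LL -/LL big_flatten big_map /=; apply: eq_bigr => r _.
case: ifP => _; first by rewrite big_cons big_nil addr0 /wt big_cons big_nil mulr1.
case: ifP => _; last by rewrite big_nil mulr0.
rewrite big_map; under eq_bigr do rewrite /wt big_cons -/(wt p _).
rewrite -mulr_sumr sum_combos; congr (_ * _).
under eq_bigr do rewrite IH.
by rewrite big_enum prodr_const card_ord.
Qed.
End Weights.

End PartComb.

Section PartSem.
Local Open Scope classical_set_scope.
Definition stp (m : option nat) (a : nat) : option nat :=
  match m with Some k.+1 => Some (maxn k a) | _ => None end.

Fixpoint bf {d} (f : vertex d -> nat) (x : vertex d) (m : option nat) (t : vertex d) : option nat :=
  match t with [::] => m | i :: t' => bf f (rcons x i) (stp m (f (rcons x i))) t' end.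

Definition beta {d} (f : vertex d -> nat) (v : vertex d) := bf f [::] (Some (f [::])) v.

Lemma bf_cat {d} (f : vertex d -> nat) x m t1 t2 :
  bf f x m (t1 ++ t2) = bf f (x ++ t1) (bf f x m t1) t2.
Proof.
elim: t1 x m => [|i t1 IH] x m /=; first by rewrite cats0.
by rewrite IH cat_rcons.
Qed.

Lemma bf_None {d} (f : vertex d -> nat) x t : bf f x None t = None.
Proof. by elim: t x => //= i t IH x. Qed.

Lemma bf_rcons {d} (f : vertex d -> nat) x m t i :
  bf f x m (rcons t i) = stp (bf f x m t) (f (x ++ rcons t i)).
Proof. by rewrite -cats1 bf_cat /= cats1 -rcons_cat. Qed.

Lemma bf_cone {d} (f : vertex d -> nat) t : forall x k, (size t <= k)%N ->
  exists k', bf f x (Some k) t = Some k' /\ (k - size t <= k')%N.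
Proof.
elim: t => [|i t IH] x k /= h; first by exists k; rewrite subn0.
case: k h => // k h.
have h' : (size t <= maxn k (f (rcons x i)))%N by rewrite (leq_trans _ (leq_maxl _ _)).
have [k' [-> hk']] := IH (rcons x i) _ h'.
exists k'; split => //; apply: leq_trans hk'; rewrite subSS; apply: leq_sub2r; exact: leq_maxl.
Qed.

Lemma ext_Q {d} (f : vertex d -> nat) (d0 : (0 < d)%N) n : forall u b,
  ext f n u b <-> (forall t, bf f u (Some (maxn (f u) b)) t != None -> (size t < n)%N).
Proof.
elim: n => [|n IH] u b /=.
  by split => // /(_ [::] isT).
set s := maxn (f u) b.
have Qchild : (forall t, bf f u (Some s) t != None -> (size t < n.+1)%N) <->
   (forall i t, bf f (rcons u i) (stp (Some s) (f (rcons u i))) t != None -> (size t < n)%N).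
  split=> [H i t /(H (i :: t))|H [|i t] //=]; first by [].
  by move/(H i).
rewrite Qchild; case: (eqVneq s 0) => [s0|sn0] /=.
  by split => // _ i t; rewrite s0 /= bf_None.
have [k sk] : exists k, s = k.+1 by case: (s) sn0 => // k _; exists k.
split.
  move=> /andP [sn /allP H] i t; rewrite sk /=.
  have := H i (mem_enum _ i); rewrite IH sk /= maxnC; exact.
move=> H; apply/andP; split.
  rewrite leqNgt; apply/negP => ns.
  have hh : (size (nseq k (Ordinal d0)) <= maxn k (f (rcons u (Ordinal d0))))%N.
    by rewrite size_nseq leq_maxl.
  have [k' [hk _]] := @bf_cone _ f (nseq k (Ordinal d0)) (rcons u (Ordinal d0)) _ hh.
  have := H (Ordinal d0) (nseq k (Ordinal d0)); rewrite sk /= hk size_nseq => /(_ isT).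
  by move: ns; rewrite sk; lia.
apply/allP => i _; rewrite IH sk /= maxnC; move=> t; have := H i t; rewrite sk /=; exact.
Qed.

Lemma beta_ge {d} (f : vertex d -> nat) v m : beta f v = Some m -> (f v <= m)%N.
Proof.
elim/last_ind: v m => [|w i IH] m; first by move=> [<-].
rewrite /beta bf_rcons -/(beta f w) /=; case: (beta f w) => // -[|k] //= [<-].
exact: leq_maxr.
Qed.

Lemma infected_beta {d} (f : vertex d -> nat) v :
  infected_all f v <-> beta f v != None.
Proof.
split.
  case=> n _; elim: n v => [|n IH] v /=; first by move=> ->.
  case=> u /IH; case E: (beta f u) => [m|] // _ [/prefixP [t ->]]; rewrite /vdist size_cat addKn => ht.
  have [k' [hk _]] := @bf_cone _ f t u m (leq_trans ht (beta_ge E)).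
  by rewrite /beta bf_cat -/(beta f u) E hk.
case E: (beta f v) => [m|] // _.
suff : exists x, infected_all f x /\ prefix x v /\ (size v - size x + m <= f x)%N.
  case=> x [[n _ xin] [pxv h]]; exists n.+1 => //; exists x => //; split => //.
  by rewrite /vdist; lia.
elim/last_ind: v m E => [|w i IH] m.
  by move=> [<-]; exists [::]; split; [exists 0%N|split; [exact: prefix0s|rewrite subnn]].
rewrite /beta bf_rcons -/(beta f w) /=; case E: (beta f w) => [[|k]|] //= [<-].
have [x [[n _ xin] [pxw h]]] := IH _ E.
have sxw := size_prefix pxw.
case: (leqP (f (rcons w i)) k) => hk.
  exists x; split; first by exists n.
  split; first exact: prefix_trans pxw (prefix_rcons w i).
  by rewrite size_rcons; lia.
exists (rcons w i); split.
  exists n.+1 => //; exists x => //; split; first exact: prefix_trans pxw (prefix_rcons w i).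
  by rewrite /vdist size_rcons; lia.
split; first exact: prefix_refl.
by rewrite subnn add0n.
Qed.

Fixpoint allw d (n : nat) : seq (vertex d) :=
  match n with 0 => [:: [::]] | n'.+1 => [::] :: [seq i :: w | i <- enum 'I_d, w <- allw d n'] end.

Lemma mem_allw d n (t : vertex d) : (size t <= n)%N -> t \in allw d n.
Proof.
elim: n t => [|n IH] [|i t] //=.
move=> h; rewrite in_cons; apply/orP; right; apply: allpairs_f; first by rewrite mem_enum.
exact: IH.
Qed.

Lemma finite_bounded {d} (A : set (vertex d)) :
  finite_set A <-> exists n, forall t, A t -> (size t < n)%N.
Proof.
split.
  move/finite_seqP => [s ->]; exists (\max_(x <- s) size x).+1 => t ts.
  by rewrite ltnS; apply: (leq_bigmax_seq (P := xpredT)).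
case=> n H; apply: (@sub_finite_set _ _ [set` allw d n]) => // t /H h.
by apply: mem_allw; exact: ltnW.
Qed.

Lemma ext_root {d} (f : vertex d -> nat) (d0 : (0 < d)%N) n :
  ext f n [::] 0 <-> (forall t, infected_all f t -> (size t < n)%N).
Proof.
rewrite ext_Q // maxn0; split => H t; [rewrite infected_beta|rewrite -infected_beta]; exact: H.
Qed.

Lemma not_survival {d} {T : Type} (Rad : vertex d -> T -> nat) (d0 : (0 < d)%N) :
  ~` survival Rad = \bigcup_n [set w | ext (Rad^~ w) n [::] 0].
Proof.
apply/seteqP; split => w /=.
  rewrite /survival /= => /contrapT /finite_bounded [n H]; exists n => //=.
  by apply/ext_root.
case=> n _ /= /(ext_root _ d0) H; rewrite /survival /= => /(_ _); apply.
by apply/finite_bounded; exists n.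
Qed.

Lemma ext_mono {d} (f : vertex d -> nat) (d0 : (0 < d)%N) n :
  ext f n [::] 0 -> ext f n.+1 [::] 0.
Proof. by rewrite !ext_root // => H t /H /ltnW. Qed.

End PartSem.

Section PartMeas.
Local Open Scope classical_set_scope.
Local Open Scope ring_scope.
Section Meas.
Context (R : realType) (dm : measure_display) (Omega : measurableType dm)
  (P : probability Omega R) (d : nat) (p : nat -> R)
  (Rad : vertex d -> Omega -> nat) (H : iid_law P Rad p).

Definition cyl (c : config d) : set Omega := [set w | agree (Rad^~ w) c].

Lemma cyl_meas c : measurable (cyl c).
Proof.
elim: c => [|[v m] c IH].
  by rewrite (_ : cyl [::] = setT); [exact: measurableT|apply/seteqP].
have -> : cyl ((v, m) :: c) = [set w | Rad v w = m] `&` cyl c.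
  apply/seteqP; split => w; rewrite /cyl /agree /=; first by move=> /andP [/eqP -> ->].
  by move=> [-> ->]; rewrite eqxx.
by apply: measurableI => //; exact: H.1.
Qed.

Lemma cyl_prob c : uniq (map fst c) -> P (cyl c) = (wt p c)%:E.
Proof.
move=> U.
have [k [E1 E2]] : exists k : vertex d -> nat,
    cyl c = \bigcap_(i in [set` map fst c]) [set w | Rad i w = k i] /\
    \prod_(i <- map fst c) p (k i) = wt p c.
  elim: c U => [|[v m] c IH] /=.
    move=> _; exists (fun _ => 0%N); split; last by rewrite big_nil /wt big_nil.
    by apply/seteqP; split => w //= _ i.
  move=> /andP [vn U]; have [k' [E1 E2]] := IH U.
  exists (fun i => if i == v then m else k' i); split.
    apply/seteqP; split => w.
      rewrite /cyl /agree /= => /andP [/eqP Rv Rc] i /=; rewrite in_cons.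
      case: eqP => [->|_] //= ic.
      have : cyl c w by [].
      by rewrite E1 => /(_ i ic).
    move=> Hw; rewrite /cyl /agree /=; apply/andP; split.
      by have := Hw v (mem_head _ _); rewrite /= eqxx => ->.
    have : (\bigcap_(i in [set` map fst c]) [set w | Rad i w = k' i]) w.
      move=> i /= ic; have := Hw i; rewrite /= in_cons ic orbT => /(_ isT).
      by case: eqP => // iv; move: vn; rewrite -iv ic.
    by rewrite -E1.
  rewrite big_cons eqxx /wt big_cons -/(wt p c) -E2; congr (_ * _).
  apply: eq_big_seq => i ic; case: eqP => // iv; move: vn; by rewrite -iv ic.
by rewrite E1 (H.2 _ _ U) E2.
Qed.

Definition ucyl (L : seq (config d)) : set Omega := [set w | has (agree (Rad^~ w)) L].

Lemma ucyl_meas L : measurable (ucyl L).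
Proof.
elim: L => [|c L IH].
  rewrite (_ : ucyl [::] = set0); first exact: measurable0.
  by apply/seteqP; split => w.
have -> : ucyl (c :: L) = cyl c `|` ucyl L.
  by apply/seteqP; split => w; rewrite /ucyl /cyl /= => /orP.
by apply: measurableU => //; exact: cyl_meas.
Qed.

Lemma ucyl_prob L : (forall c, c \in L -> uniq (map fst c)) ->
  (forall f, count (agree f) L <= 1)%N -> P (ucyl L) = (\sum_(c <- L) wt p c)%:E.
Proof.
elim: L => [|c L IH] U C.
  rewrite big_nil (_ : ucyl [::] = set0) ?measure0 //.
  by apply/seteqP; split => w.
have -> : ucyl (c :: L) = cyl c `|` ucyl L.
  by apply/seteqP; split => w; rewrite /ucyl /cyl /= => /orP.
rewrite measureU; first last.
- apply/seteqP; split => w //= [c1 c2]; have := C (Rad^~ w).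
  by rewrite /= c1 add1n ltnS leqn0 => /eqP; apply/eqP; rewrite -lt0n -has_count.
- exact: ucyl_meas.
- exact: cyl_meas.
rewrite big_cons EFinD -(cyl_prob (U _ (mem_head _ _))) -IH //.
  by move=> c' c'L; apply: U; rewrite in_cons c'L orbT.
move=> f; have := C f; rewrite /=; case: (agree f c) => /= h; last by []. by apply: leq_trans h; rewrite leq_addl.
Qed.

Lemma ext_prob n u b :
  P [set w | ext (Rad^~ w) n u b] = (ee d p n b)%:E.
Proof.
have -> : [set w | ext (Rad^~ w) n u b] = ucyl (LL n u b).
  by apply/seteqP; split => w; rewrite /ucyl /= has_LL.
rewrite ucyl_prob ?sum_LL //.
  by move=> c /wf_LL /andP [].
by move=> f; exact: count_LL.
Qed.

Lemma ext_meas n u b : measurable [set w | ext (Rad^~ w) n u b].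
Proof.
have -> : [set w | ext (Rad^~ w) n u b] = ucyl (LL n u b).
  by apply/seteqP; split => w; rewrite /ucyl /= has_LL.
exact: ucyl_meas.
Qed.

End Meas.

End PartMeas.

Section PartAna1.
Local Open Scope ring_scope.
Lemma ler_sum_seq {R : numDomainType} {I : eqType} (r : seq I) (F G : I -> R) :
  (forall i, i \in r -> true -> F i <= G i) -> \sum_(i <- r) F i <= \sum_(i <- r) G i.
Proof. by move=> H; rewrite big_seq [X in _ <= X]big_seq; apply: ler_sum => i /H; apply. Qed.

Section Ana1.
Context (R : realType) (d : nat) (p : nat -> R).
Hypothesis hd : (1 <= d)%N.
Hypothesis hp0 : forall k, 0 <= p k.
Hypothesis hps : forall n, \sum_(r <- iota 0 n) p r <= 1.
Hypothesis he : forall n b, 0 <= ee d p n b <= 1.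

Notation ee := (ee d p).

Lemma ee_ge0 n b : 0 <= ee n b. Proof. by have /andP[] := he n b. Qed.
Lemma ee_le1 n b : ee n b <= 1. Proof. by have /andP[] := he n b. Qed.

Lemma ee_rho rho : 0 <= rho <= 1 ->
  (forall N, \sum_(k <- iota 0 N) p k * rho ^+ (d ^ k) + (1 - rho) * p 0 <= rho) ->
  forall n b, ee n b <= rho ^+ (d ^ b).
Proof.
move=> /andP [r0 r1] hN; elim=> [|n IH] b /=; first exact: exprn_ge0.
have T s : (1 <= s)%N -> (if (s <= n)%N then ee n s.-1 ^+ d else 0) <= rho ^+ (d ^ s).
  move=> s1; case: ifP => _; last exact: exprn_ge0.
  apply: le_trans (_ : (rho ^+ (d ^ s.-1)) ^+ d <= _).
    by apply: lerXn2r; rewrite ?nnegrE ?exprn_ge0 ?ee_ge0.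
  by rewrite -exprM -expnSr prednK.
case: b => [|b].
  rewrite big_cons maxn0 eqxx mulr1 expn0 expr1.
  apply: le_trans (hN n.+1); rewrite -[iota 0 n.+1]/(0%N :: iota 1 n) big_cons expn0 expr1.
  rewrite (_ : p 0 * rho + _ + _ = p 0 + \sum_(j <- iota 1 n) p j * rho ^+ (d ^ j)); last first.
    by rewrite mulrBl mul1r [p 0 * rho]mulrC; set S := \sum_(_ <- _) _; ring.
  rewrite lerD2l.
  apply: ler_sum_seq => r; rewrite mem_iota => /andP [r1' _] _.
  rewrite maxn0 (negbTE (_ : r != 0%N)); last by rewrite -lt0n.
  by apply: ler_wpM2l => //; exact: T.
apply: le_trans (_ : \sum_(r <- iota 0 n.+1) p r * rho ^+ (d ^ b.+1) <= _).
  apply: ler_sum => r _; rewrite (negbTE (_ : maxn r b.+1 != 0%N)); last first.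
    by rewrite -lt0n; apply: leq_trans (leq_maxr _ _).
  apply: ler_wpM2l => //; have := T _ (leq_trans (ltn0Sn b) (leq_maxr r b.+1)); move/le_trans; apply.
  by apply: ler_wiXn2l => //; apply: leq_pexp2l => //; exact: leq_maxr.
by rewrite -mulr_suml; apply: ler_piMl; [exact: exprn_ge0|exact: hps].
Qed.

Definition Fm m c := if (c <= m)%N then ee m c.-1 ^+ d else 0.

Lemma Fm_ge0 m c : 0 <= Fm m c.
Proof. by rewrite /Fm; case: ifP => _ //; rewrite exprn_ge0 ?ee_ge0. Qed.
Lemma Fm_le1 m c : Fm m c <= 1.
Proof. by rewrite /Fm; case: ifP => _ //; rewrite exprn_ile1 ?ee_ge0 ?ee_le1. Qed.

Lemma ee_split m c : (1 <= c)%N -> ee m.+1 0 * Fm m c <= ee m.+1 c.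
Proof.
move=> c1; rewrite /= mulr_suml; apply: ler_sum => r _.
rewrite -mulrA; apply: ler_wpM2l => //.
rewrite (negbTE (_ : maxn r c != 0%N)); last by rewrite -lt0n; apply: leq_trans (leq_maxr _ _).
rewrite maxn0 -/(Fm m (maxn r c)).
case: (leqP r c) => hrc.
  apply: ler_piMl; first exact: Fm_ge0.
  by case: eqP => _ //; rewrite -/(Fm m r); exact: Fm_le1.
rewrite (negbTE (_ : r != 0%N)); last by rewrite -lt0n; apply: leq_ltn_trans hrc.
rewrite -/(Fm m r); apply: ler_piMr; [exact: Fm_ge0|exact: Fm_le1].
Qed.

Lemma ee_prod c : forall n, \prod_(j < c.+1) ee (n - j) 0 ^+ (d ^ j) <= ee n c.
Proof.
elim: c => [|c IH] n; first by rewrite big_ord_recl big_ord0 mulr1 subn0 expn0 expr1.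
case: n => [|m].
  by rewrite big_ord_recl /= expn0 expr1 mul0r.
rewrite big_ord_recl subn0 expn0 expr1.
apply: le_trans (ee_split m _) => //; apply: ler_wpM2l; first exact: ee_ge0.
rewrite /Fm; case: ifP => hc.
  apply: le_trans (_ : (\prod_(j < c.+1) ee (m - j) 0 ^+ (d ^ j)) ^+ d <= _); last first.
    by apply: lerXn2r; rewrite ?nnegrE ?ee_ge0 ?prodr_ge0 // => j _; rewrite exprn_ge0 ?ee_ge0.
  rewrite -prodrXl; apply: ler_prod => j _; rewrite exprn_ge0 ?ee_ge0 //=.
  by rewrite /bump /= add1n subSS -exprM expnSr.
rewrite (bigD1 (Ordinal (ltnSn c))) //= /bump /= add1n.
have -> : (m.+1 - c.+1 = 0)%N by apply/eqP; rewrite subn_eq0 leqNgt ltnS -[(c < m)%N]/(c.+1 <= m)%N hc.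
by rewrite (_ : ee 0 0 = 0) // expr0n expn_eq0 (negbTE (_ : d != 0%N)) ?mul0r // -lt0n.
Qed.

Lemma ee_lower m : \sum_(r <- iota 0 m.+1) p r *
   (if r == 0%N then 1 else \prod_(j < r) ee (m - j) 0 ^+ (d ^ j.+1)) <= ee m.+1 0.
Proof.
apply: (@le_trans _ _ (\sum_(r <- iota 0 m.+1) p r * (if maxn r 0 == 0%N then 1 else
   if (maxn r 0 <= m)%N then ee m (maxn r 0).-1 ^+ d else 0))); last by [].
apply: ler_sum_seq => r; rewrite mem_iota add0n ltnS => /andP [_ rm] _.
rewrite maxn0; case: eqP => // /eqP rn0; apply: ler_wpM2l => //.
rewrite rm; apply: le_trans (_ : (\prod_(j < r) ee (m - j) 0 ^+ (d ^ j)) ^+ d <= _).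
  by rewrite -prodrXl; apply: ler_prod => j _; rewrite exprn_ge0 ?ee_ge0 //= -exprM expnSr.
have := ee_prod r.-1 m; rewrite prednK ?lt0n // => h.
by apply: lerXn2r; rewrite ?nnegrE ?ee_ge0 ?prodr_ge0 // => j _; rewrite exprn_ge0 ?ee_ge0.
Qed.
End Ana1.

End PartAna1.

Section PartAna2.
Local Open Scope classical_set_scope.
Local Open Scope ring_scope.
Section Helpers.
Context (R : realType).

Lemma cvg_le_const (u : R^nat) (a c : R) : u @ \oo --> a -> (forall n, u n <= c) -> a <= c.
Proof.
move=> ua uc; rewrite -(cvg_lim _ ua) //; apply: limr_le; first by apply/cvg_ex; exists a.
by apply: nearW.
Qed.

Lemma cvg_ge_const (u : R^nat) (a c : R) : u @ \oo --> a -> (forall n, c <= u n) -> c <= a.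
Proof.
move=> ua uc; rewrite -(cvg_lim _ ua) //; apply: limr_ge; first by apply/cvg_ex; exists a.
by apply: nearW.
Qed.

Lemma cvg_pow (u : R^nat) (x : R) n : u @ \oo --> x -> (fun k => u k ^+ n) @ \oo --> x ^+ n.
Proof.
move=> ux; elim: n => [|n IH].
  by under eq_fun do rewrite expr0; rewrite expr0; exact: cvg_cst.
under eq_fun do rewrite exprS; rewrite exprS; exact: cvgM.
Qed.

Definition NN (d k : nat) : nat := \sum_(j < k) d ^ j.+1.
Definition GG (d : nat) (p : nat -> R) (M : nat) (x : R) : R :=
  \sum_(k <- iota 0 M) p k * x ^+ NN d k.

Lemma cvg_GG d p M (u : R^nat) (x : R) : u @ \oo --> x -> (fun k => GG d p M (u k)) @ \oo --> GG d p M x.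
Proof.
move=> ux; rewrite /GG; elim: (iota 0 M) => [|r s IH].
  by under eq_fun do rewrite big_nil; rewrite big_nil; exact: cvg_cst.
under eq_fun do rewrite big_cons; rewrite big_cons; apply: cvgD => //.
by apply: cvgM; [exact: cvg_cst|exact: cvg_pow].
Qed.

Lemma GG_ge0 d p M x : (forall k, 0 <= p k) -> 0 <= x -> 0 <= GG d p M x.
Proof. by move=> hp x0; apply: sumr_ge0 => k _; rewrite mulr_ge0 ?exprn_ge0. Qed.

Lemma GG_mono d p M x y : (forall k, 0 <= p k) -> 0 <= x -> x <= y -> GG d p M x <= GG d p M y.
Proof.
move=> hp x0 xy; apply: ler_sum => k _; apply: ler_wpM2l => //.
by apply: lerXn2r; rewrite ?nnegrE // (le_trans x0).
Qed.

Lemma GG_le1 d p M x : (forall k, 0 <= p k) -> (\sum_(r <- iota 0 M) p r <= 1) ->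
  0 <= x -> x <= 1 -> GG d p M x <= 1.
Proof.
move=> hp hs x0 x1; apply: le_trans hs; apply: ler_sum => k _.
by apply: ler_piMr => //; exact: exprn_ile1.
Qed.

End Helpers.

Section PsiSeries.
Context (R : realType).
Local Open Scope ereal_scope.

Lemma NN_eq (d k : nat) : ((NN d k)%:R * (d%:R - 1) = d%:R * (d%:R ^+ k - 1) :> R)%R.
Proof.
elim: k => [|k IH]; first by rewrite /NN big_ord0 expr0 subrr mulr0 mul0r.
rewrite /NN big_ord_recr /= -/(NN d k) natrD mulrDl IH natrX exprS.
ring.
Qed.

Lemma NN_exp (d k : nat) : (2 <= d)%N ->
  ((d%:R / (d%:R - 1)) * (d%:R ^+ k - 1) = (NN d k)%:R :> R)%R.
Proof.
move=> d2; have hd : (d%:R - 1 != 0 :> R)%R.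
  by rewrite subr_eq0 pnatr_eq1; case: d d2 => [|[|]].
apply: (mulIf hd); rewrite NN_eq; by field.
Qed.

Lemma psi_partial d (p : nat -> R) (x : R) n : (2 <= d)%N -> (0 <= x)%R ->
  \sum_(0 <= k < n) ((p k * x `^ ((d%:R / (d%:R - 1)) * (d%:R ^+ k - 1)))%:E) =
  (GG d p n x)%:E.
Proof.
move=> d2 x0; rewrite sumEFin /GG /index_iota subn0; congr EFin; apply: eq_bigr => k _.
by rewrite NN_exp // powR_mulrn.
Qed.

Lemma psi_le (d : nat) (p : nat -> R) (x c : R) : (2 <= d)%N -> (0 <= x)%R ->
  (forall k, 0 <= p k)%R ->
  (forall n, GG d p n x <= c)%R -> psi_map d p x <= c%:E.
Proof.
move=> d2 x0 hp H; rewrite /psi_map; apply: lime_le.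
  by apply: is_cvg_nneseries => n _ _; rewrite lee_fin mulr_ge0 ?powR_ge0.
by apply: nearW => n; rewrite psi_partial // lee_fin.
Qed.

Lemma psi_ge (d : nat) (p : nat -> R) (x : R) n : (2 <= d)%N -> (0 <= x)%R ->
  (forall k, 0 <= p k)%R -> (GG d p n x)%:E <= psi_map d p x.
Proof.
move=> d2 x0 hp; rewrite -psi_partial //; apply: nneseries_lim_ge => k _ _.
by rewrite lee_fin mulr_ge0 ?powR_ge0.
Qed.
End PsiSeries.

Section PsiMain.
Context (R : realType) (d : nat) (p : nat -> R).
Hypothesis d2 : (2 <= d)%N.
Hypothesis hp0 : forall k, 0 <= p k.
Hypothesis hps : forall n, \sum_(r <- iota 0 n) p r <= 1.
Hypothesis he : forall n b, 0 <= ee d p n b <= 1.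
Notation E := (fun n => ee d p n 0).
Hypothesis hmono : forall n, E n <= E n.+1.
Variable eta : R.
Hypothesis heta : E @ \oo --> eta.

Lemma d1 : (1 <= d)%N. Proof. exact: ltnW. Qed.

Lemma E_mono n m : (n <= m)%N -> E n <= E m.
Proof. by move=> nm; have /nondecreasing_seqP H := hmono; exact: H. Qed.

Lemma E_le_eta n : E n <= eta.
Proof.
rewrite -(cvg_lim _ heta) //.
have ndE : nondecreasing_seq E by apply/nondecreasing_seqP.
have cE : cvgn E by apply/cvg_ex; exists eta.
exact: (nondecreasing_cvgn_le ndE cE n).
Qed.

Lemma eta01 : 0 <= eta <= 1.
Proof.
apply/andP; split.
  by apply: cvg_ge_const heta _ => n; exact: (ee_ge0 he).
by apply: cvg_le_const heta _ => n; exact: (ee_le1 he).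
Qed.

Lemma G_E M k : GG d p M.+1 (E k) <= E (k + M).+1.
Proof.
apply: le_trans (ee_lower d1 hp0 he _).
have -> : iota 0 (k + M).+1 = iota 0 M.+1 ++ iota M.+1 k.
  by rewrite -[M.+1]add0n -iotaD add0n addSn addnC.
rewrite big_cat /=; apply: le_trans (_ : _ <= \sum_(r <- iota 0 M.+1) p r *
   (if r == 0%N then 1 else \prod_(j < r) ee d p (k + M - j) 0 ^+ (d ^ j.+1))) _.
  rewrite /GG; apply: ler_sum_seq => r; rewrite mem_iota add0n ltnS => /andP [_ rM] _.
  apply: ler_wpM2l => //; case: eqP => [->|_]; first by rewrite /NN big_ord0 expr0.
  rewrite /NN -prodrXr; apply: ler_prod => j _; rewrite exprn_ge0 ?(ee_ge0 he) //=.
  apply: lerXn2r; rewrite ?nnegrE ?(ee_ge0 he) //; apply: E_mono.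
  by rewrite -addnBA ?leq_addr //; apply: leq_trans (ltnW (ltn_ord j)) rM.
rewrite lerDl; apply: sumr_ge0 => r _; apply: mulr_ge0 => //.
case: eqP => // _; apply: prodr_ge0 => j _; exact: exprn_ge0 (ee_ge0 he _ _).
Qed.

Lemma G_eta M : GG d p M eta <= eta.
Proof.
case: M => [|M]; first by rewrite /GG big_nil; case/andP: eta01.
have h := cvg_GG (d:=d) (p:=p) (M:=M.+1) heta; apply: (cvg_le_const h) => k.
by apply: le_trans (G_E M k) _; exact: E_le_eta.
Qed.

Local Open Scope ereal_scope.
Definition gr (x : R) : R := fine (psi_map d p x).

Lemma psi_fin (x : R) : (0 <= x <= 1)%R -> psi_map d p x = (gr x)%:E /\ (0 <= gr x <= 1)%R.
Proof.
move=> /andP [x0 x1].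
have h1 : psi_map d p x <= 1%:E.
  by apply: psi_le => // n; apply: GG_le1.
have h0 : 0 <= psi_map d p x.
  by have := psi_ge 0 d2 x0 hp0; rewrite /GG big_nil.
have fin : psi_map d p x \is a fin_num by rewrite ge0_fin_numE // (le_lt_trans h1) ?ltry.
split; first by rewrite /gr fineK.
apply/andP; split; first exact: fine_ge0.
by rewrite -lee_fin /gr fineK.
Qed.

Lemma GG_le_gr n (x : R) : (0 <= x <= 1)%R -> (GG d p n x <= gr x)%R.
Proof.
move=> hx; have [E1 _] := psi_fin hx; rewrite -lee_fin -E1; apply: psi_ge => //.
by case/andP: hx.
Qed.

Lemma gr_mono (x y : R) : (0 <= x)%R -> (x <= y)%R -> (y <= 1)%R -> (gr x <= gr y)%R.
Proof.
move=> x0 xy y1.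
have hx : (0 <= x <= 1)%R by rewrite x0 (le_trans xy y1).
have hy : (0 <= y <= 1)%R by rewrite (le_trans x0 xy) y1.
have [Ex _] := psi_fin hx; rewrite -lee_fin -Ex; apply: psi_le => // n.
apply: le_trans (GG_le_gr n hy); exact: GG_mono.
Qed.

Fixpoint zz (k : nat) : R := match k with 0 => 0%R | k'.+1 => gr (zz k') end.

Lemma gr_eta : (gr eta <= eta)%R.
Proof.
have [E1 _] := psi_fin eta01; rewrite -lee_fin -E1; apply: psi_le => //.
  by case/andP: eta01.
exact: G_eta.
Qed.

Lemma zz_bound k : (0 <= zz k <= eta)%R.
Proof.
have [e0 e1] := andP eta01.
elim: k => [|k IH] /=; first by rewrite lexx.
have [z0 ze] := andP IH.
have hz : (0 <= zz k <= 1)%R by rewrite z0 (le_trans ze e1).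
have [_ /andP [g0 _]] := psi_fin hz; rewrite g0 /=.
by apply: le_trans gr_eta; apply: gr_mono.
Qed.

Lemma zz_mono k : (zz k <= zz k.+1)%R.
Proof.
have [e0 e1] := andP eta01.
elim: k => [|k IH] /=.
  have h : (0 <= (0:R) <= 1)%R by rewrite lexx ler01.
  by have [_ /andP [g0 _]] := psi_fin h.
have [z0 ze] := andP (zz_bound k); have [z0' ze'] := andP (zz_bound k.+1).
by apply: gr_mono => //; apply: le_trans e1.
Qed.

Lemma psi_le_eta (psi : R) : smallest_nonneg_root (psi_map d p) psi -> (psi <= eta)%R.
Proof.
move=> [_ [_ Hmin]].
have [e0 e1] := andP eta01.
have ndz : nondecreasing_seq zz by apply/nondecreasing_seqP; exact: zz_mono.
have bz : has_ubound (range zz).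
  by exists eta => _ [k _ <-]; case/andP: (zz_bound k).
have cz := nondecreasing_cvgn ndz bz.
set zs := sup (range zz) in cz.
have zk k : (zz k <= zs)%R.
  rewrite -(cvg_lim _ cz) //; apply: nondecreasing_cvgn_le => //.
  by apply/cvg_ex; exists zs.
have zs0 : (0 <= zs)%R by apply: le_trans (zk 0%N); rewrite lexx.
have zse : (zs <= eta)%R by apply: cvg_le_const cz _ => k; case/andP: (zz_bound k).
have hzs : (0 <= zs <= 1)%R by rewrite zs0 (le_trans zse e1).
have hzk k : (0 <= zz k <= 1)%R.
  by have /andP [z0 ze] := zz_bound k; rewrite z0 (le_trans ze e1).
have [Ezs _] := psi_fin hzs.
suff : gr zs = zs.
  by move=> gz; apply: le_trans zse; apply: Hmin => //; rewrite Ezs gz.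
apply/eqP; rewrite eq_le; apply/andP; split.
  rewrite -lee_fin -Ezs; apply: psi_le => // n.
  have h2 := cvg_GG (d:=d) (p:=p) (M:=n) cz.
  apply: (cvg_le_const h2) => k.
  apply: le_trans (GG_le_gr n (hzk k)) _.
  exact: (zk k.+1).
have cS : (fun k => zz k.+1) @ \oo --> zs by rewrite (cvg_shiftS zz).
apply: (cvg_le_const cS) => k /=.
by apply: gr_mono => //; [case/andP: (hzk k)|case/andP: hzs].
Qed.
End PsiMain.

End PartAna2.

Unset Implicit Arguments. Set Strict Implicit. Set Printing Implicit Defensive.
Local Open Scope classical_set_scope.
Local Open Scope ring_scope.

Theorem theorem2 (R : realType) (dm : measure_display) (Omega : measurableType dm)
  (P : probability Omega R) (d : nat) (p : nat -> R)
  (Rad : vertex d -> Omega -> nat) (rho psi : R) :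
  (2 <= d)%N ->
  iid_law P Rad p ->
  0 < p 0%N < 1 ->
  smallest_nonneg_root (rho_map d p) rho ->
  smallest_nonneg_root (psi_map d p) psi ->
  ((1 - rho)%:E <= P (survival Rad))%E /\ (P (survival Rad) <= (1 - psi)%:E)%E.
Proof.
move=> d2 H _ hrho hpsi.
have d0 : (0 < d)%N by apply: ltnW.
have d1 : (1 <= d)%N by apply: ltnW.
have hp0 : forall k, 0 <= p k.
  move=> k; have := H.2 [:: [::]] (fun _ => k) isT.
  rewrite big_cons big_nil mulr1 => E; rewrite -lee_fin -E; exact: measure_ge0.
have hps : forall n, \sum_(r <- iota 0 n) p r <= 1.
  move=> n; set L := [seq [:: ([::] : vertex d, r)] | r <- iota 0 n].
  have E : P (ucyl Rad L) = (\sum_(c <- L) wt p c)%:E.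
    apply: (@ucyl_prob R dm Omega P d p Rad H L).
    - by move=> c /mapP [r _ ->].
    - move=> f; rewrite count_map.
      rewrite (eq_count (a2 := pred1 (f [::]))); last by move=> r; rewrite /= /agree /= andbT.
      by rewrite count_uniq_mem ?iota_uniq //; case: (_ \in _).
  move: E; rewrite big_map.
  under eq_bigr do rewrite /wt big_cons big_nil mulr1 /=.
  move=> E; rewrite -lee_fin -E.
  by apply: probability_le1; exact: (ucyl_meas H).
have he : forall n b, 0 <= ee d p n b <= 1.
  move=> n b; rewrite -!lee_fin -(ext_prob H n [::] b) measure_ge0 /=.
  by apply: probability_le1; exact: (ext_meas H).
set A := fun n => [set w | ext (Rad^~ w) n [::] 0].
have mA : forall n, measurable (A n) by move=> n; exact: (ext_meas H).
have PA : forall n, P (A n) = (ee d p n 0)%:E by move=> n; exact: (ext_prob H).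
have AS : forall n, A n `<=` A n.+1 by move=> n w; exact: ext_mono.
have hmono : forall n, ee d p n 0 <= ee d p n.+1 0.
  by move=> n; rewrite -lee_fin -!PA; apply: le_measure; rewrite ?inE.
have nS : ~` survival Rad = \bigcup_n A n by exact: not_survival.
have mU : measurable (\bigcup_n A n) by exact: bigcupT_measurable.
have ndA : nondecreasing_seq A.
  apply/nondecreasing_seqP => n; apply/subsetPset; exact: AS.
have cA := nondecreasing_cvg_mu mA mU ndA.
set eta := fine (P (\bigcup_n A n)).
have Pfin : P (\bigcup_n A n) = eta%:E.
  rewrite /eta fineK // ge0_fin_numE ?measure_ge0 //.
  by apply: (le_lt_trans (probability_le1 _ mU)); exact: ltry.
have heta : (fun n => ee d p n 0) @ \oo --> eta.
  have cA2 : (fun n => P (A n)) @ \oo --> eta%:E.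
    rewrite -Pfin; exact: (cA R P).
  have := fine_cvg cA2.
  rewrite (_ : fine \o _ = (fun n => ee d p n 0)) //. apply; exact: eventually_filter. apply/funext => n /=. by rewrite (PA n).
have PS : P (survival Rad) = (1 - eta)%:E.
  rewrite -[survival Rad]setCK nS probability_setC // Pfin.
  by rewrite EFinB.
rewrite PS; split.
  case: (leP rho 1) => r1; last first.
    rewrite lee_fin; apply: le_trans (_ : 0 <= _).
      by rewrite subr_le0 ltW.
    by rewrite subr_ge0; have := he; move: heta => h _; apply: cvg_le_const h _ => n; case/andP: (he n 0%N).
  have [r0 [req _]] := hrho.
  have hN : forall N, \sum_(k <- iota 0 N) p k * rho ^+ (d ^ k) + (1 - rho) * p 0 <= rho.
    move=> N; rewrite -lee_fin -req /rho_map EFinD leeD2r //.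
    have := @nneseries_lim_ge R (fun k => (p k * rho ^+ (d ^ k))%:E) xpredT 0 N.
    rewrite sumEFin /index_iota subn0; apply => k _ _.
    by rewrite lee_fin mulr_ge0 ?exprn_ge0.
  have Er : forall n, ee d p n 0 <= rho.
    move=> n; have := ee_rho d1 hp0 hps he (rho := rho) _ hN n 0; rewrite expn0 expr1; apply.
    by rewrite r0 r1.
  rewrite lee_fin lerD2l lerN2; exact: cvg_le_const heta Er.
rewrite lee_fin lerD2l lerN2.
exact: (psi_le_eta d2 hp0 hps he hmono heta hpsi).
Qed.
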